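(* Let $A$ be a sub-tree of $T$, let $S_1,S_2\subseteq V_A$ and let $x\in[0,d(r_A)]$. Then $$G(S_1,x)+G(S_2,x)\le G(S_1\cup S_2,x)+G(S_1\cap S_2,x).$$
   Context: Setting. $T$ is a finite tree rooted at $r_T$, node set $V_T$; every edge $e$ has weight $w_e\ge 0$. Every node $v$ has a probability $\pi_v\in(0,1]$ and a prize $p_v\in\mathbb{R}$. $d(v)$ is the total weight of the path from $r_T$ to $v$. A random set $\omega\subseteq V_T$ contains each node $v$ independently with probability $\pi_v$. For $S\subseteq V_T$, $P(S)=1-\prod_{s\in S}(1-\pi_s)$ ($P(\emptyset)=0$). For a node $a$, the sub-tree $A$ rooted at $r_A=a$ consists of $a$ and all its descendants, with node set $V_A$. For $Q\subseteq V_T$, $W(Q)$ is the total weight of the edges lying on at least one path from $r_T$ to a node of $Q$. For $S\subseteq V_A$ and $x\le d(r_A)$ the expected profit is $G(S,x)=\sum_{s\in S}p_s\pi_s-\mathbb{E}[W(S\cap\omega)]+x\,P(S)$. *)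

(* Defs.v *)
From HB Require Import structures.
From mathcomp Require Import all_boot all_order all_algebra.
Set Implicit Arguments. Unset Strict Implicit. Unset Printing Implicit Defensive.
Import Order.TTheory GRing.Theory Num.Theory.
Local Open Scope ring_scope.

(* The edge between [par v] and [v] (v <> r)
   is identified with the child node [v]; its weight is [w v]. *)
Definition is_rooted_tree (V : finType) (r : V) (par : V -> V) : Prop :=
  par r = r /\ forall v : V, exists k : nat, iter k par v = r.

(* [anc par u v] : u lies on the path from the root to v (u = v allowed). *)
Definition anc (V : finType) (par : V -> V) (u v : V) : bool :=
  [exists k : 'I_#|V|.+1, iter k par v == u].

Definition subtree (V : finType) (par : V -> V) (a : V) : {set V} :=
  [set v | anc par a v].

Definition dist (R : numDomainType) (V : finType) (r : V) (par : V -> V)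
  (w : V -> R) (v : V) : R :=
  \sum_(u | (u != r) && anc par u v) w u.

Definition Wt (R : numDomainType) (V : finType) (r : V) (par : V -> V)
  (w : V -> R) (Q : {set V}) : R :=
  \sum_(u | (u != r) && [exists q in Q, anc par u q]) w u.

(* Probability that the random set omega equals the set [om]. *)
Definition prob_set (R : numDomainType) (V : finType) (pi : V -> R)
  (om : {set V}) : R :=
  (\prod_(v in om) pi v) * (\prod_(v in ~: om) (1 - pi v)).

Definition EW (R : numDomainType) (V : finType) (r : V) (par : V -> V)
  (w : V -> R) (pi : V -> R) (S : {set V}) : R :=
  \sum_(om : {set V}) prob_set pi om * Wt r par w (S :&: om).

Definition Pr (R : numDomainType) (V : finType) (pi : V -> R) (S : {set V}) : R :=
  1 - \prod_(s in S) (1 - pi s).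

Definition G (R : numDomainType) (V : finType) (r : V) (par : V -> V)
  (w pi p : V -> R) (S : {set V}) (x : R) : R :=
  \sum_(s in S) p s * pi s - EW r par w pi S + x * Pr pi S.

(* Main.v *)
Require Import Defs.
From HB Require Import structures.
From mathcomp Require Import all_boot all_order all_algebra.
From mathcomp Require Import ring lra.
Import Order.TTheory GRing.Theory Num.Theory.
Set Implicit Arguments. Unset Strict Implicit.
Local Open Scope ring_scope.

Lemma anc_fconnect (V : finType) (par : V -> V) u v :
  anc par u v = fconnect par v u.
Proof.
apply/existsP/idP.
  by case=> k /eqP <-; apply: fconnect_iter.
move=> H.
have Hk : (findex par v u < #|V|.+1)%N.
  apply: (leq_trans (findex_max H)); apply: leqW; rewrite /order; exact: max_card.
by exists (Ordinal Hk); rewrite /= iter_findex.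
Qed.

Lemma anc_trans (V : finType) (par : V -> V) u v z :
  anc par u v -> anc par v z -> anc par u z.
Proof.
rewrite !anc_fconnect => H1 H2; exact: connect_trans H2 H1.
Qed.

Section Aux.
Variables (R : realFieldType) (V : finType).

Lemma sum_sets (g : V -> bool -> R) :
  \sum_(om : {set V}) \prod_v g v (v \in om) = \prod_v (g v true + g v false).
Proof.
have -> : \prod_v (g v true + g v false) = \prod_v \sum_(b : bool) g v b.
  by apply: eq_bigr => v _; rewrite big_bool.
rewrite bigA_distr_bigA /=.
rewrite (reindex (fun f : {ffun V -> bool} => [set v | f v])) /=.
  by apply: eq_bigr => f _; apply: eq_bigr => v _; rewrite inE.
exists (fun A : {set V} => [ffun v => v \in A]) => f _.
  by apply/ffunP => v; rewrite ffunE inE.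
by apply/setP => v; rewrite inE ffunE.
Qed.

Lemma prob_setE (pi : V -> R) om :
  prob_set pi om = \prod_v (if v \in om then pi v else 1 - pi v).
Proof.
rewrite /prob_set (big_mkcond (fun v => v \in om)) (big_mkcond (fun v => v \in ~: om)).
rewrite -big_split /=; apply: eq_bigr => v _; rewrite inE.
by case: (v \in om); rewrite /= ?mulr1 ?mul1r.
Qed.

Lemma prob_ge0 (pi : V -> R) om : (forall v, 0 < pi v <= 1) -> 0 <= prob_set pi om.
Proof.
move=> Hpi; rewrite prob_setE; apply: prodr_ge0 => v _.
have := Hpi v; case: (v \in om) => /andP [h1 h2]; lra.
Qed.

Lemma sum_prob (pi : V -> R) : \sum_om prob_set pi om = 1.
Proof.
under eq_bigr => om _ do rewrite prob_setE.
rewrite (sum_sets (fun v b => if b then pi v else 1 - pi v)).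
by rewrite big1 // => v _; rewrite addrC subrK.
Qed.

Lemma prob_empty (pi : V -> R) S :
  \sum_om prob_set pi om * (S :&: om == set0)%:R = \prod_(v in S) (1 - pi v).
Proof.
pose g v (b : bool) := if b then (if v \in S then 0 else pi v) else 1 - pi v.
have -> : \sum_om prob_set pi om * (S :&: om == set0)%:R =
          \sum_(om : {set V}) \prod_v g v (v \in om).
  apply: eq_bigr => om _; rewrite prob_setE.
  case: eqP => [E|/eqP/set0Pn [v]]; rewrite ?mulr1 ?mulr0.
    apply: eq_bigr => v _; rewrite /g; case Hv: (v \in om) => //.
    case HS: (v \in S) => //.
    have : v \in S :&: om by rewrite inE HS Hv.
    by rewrite E inE.
  rewrite inE => /andP [HS Hom].
  by rewrite (bigD1 v) //= /g Hom HS mul0r.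
rewrite sum_sets [RHS]big_mkcond /=; apply: eq_bigr => v _; rewrite /g.
by case: (v \in S); rewrite ?add0r // addrC subrK.
Qed.

Lemma prob_nonempty (pi : V -> R) S :
  \sum_om prob_set pi om * (S :&: om != set0)%:R = Pr pi S.
Proof.
rewrite /Pr -(prob_empty pi S) -[X in _ = X - _](sum_prob pi) -sumrB; apply: eq_bigr => om _.
by case: eqP; rewrite /= ?mulr0 ?mulr1 ?subr0 ?subrr.
Qed.

End Aux.

Section Main.
Variables (R : realFieldType) (V : finType) (r : V) (par : V -> V) (w : V -> R) (a : V).

Definition Dv (T : {set V}) : R :=
  Wt r par w T - dist r par w a * (T != set0)%:R.

Lemma ifmul_fact (b : bool) (y : R) : (if b then y else 0) - y * b%:R = 0.
Proof. by case: b; rewrite /= ?mulr1 ?mulr0 subrr. Qed.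

Lemma DvE T : Dv T = \sum_u ((if (u != r) && [exists q in T, anc par u q] then w u else 0)
   - (if (u != r) && anc par u a then w u else 0) * (T != set0)%:R).
Proof.
by rewrite sumrB -mulr_suml -!big_mkcond.
Qed.

Lemma D_sub (T1 T2 : {set V}) : (forall v, 0 <= w v) ->
  T1 \subset subtree par a -> T2 \subset subtree par a ->
  Dv (T1 :|: T2) + Dv (T1 :&: T2) <= Dv T1 + Dv T2.
Proof.
move=> Hw H1 H2.
rewrite !DvE -!big_split /=; apply: ler_sum => u _.
case Hr: (u != r); rewrite /= ?mul0r ?subr0 ?addr0 //.
case Ha: (anc par u a).
  have key : forall T : {set V}, T \subset subtree par a ->
      [exists q in T, anc par u q] = (T != set0).
    move=> T HT; apply/existsP/set0Pn.
      by case=> q /andP [qT _]; exists q.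
    case=> q qT; exists q; rewrite qT /=.
    by apply: (anc_trans Ha); have := subsetP HT q qT; rewrite inE.
  have HU : T1 :|: T2 \subset subtree par a by rewrite subUset H1 H2.
  have HI : T1 :&: T2 \subset subtree par a.
    by apply: subset_trans H1; apply: subsetIl.
  by rewrite !key // !ifmul_fact addr0.
rewrite /= !mul0r !subr0.
have eU : [exists q in T1 :|: T2, anc par u q] =
   [exists q in T1, anc par u q] || [exists q in T2, anc par u q].
  apply/existsP/orP.
    by case=> q /andP []; rewrite inE => /orP [] qT Hq; [left|right]; apply/existsP; exists q; rewrite qT.
  by case=> /existsP [q /andP [qT Hq]]; exists q; rewrite inE qT ?orbT.
have eI : [exists q in T1 :&: T2, anc par u q] ->
   [exists q in T1, anc par u q] && [exists q in T2, anc par u q].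
  case/existsP=> q /andP []; rewrite inE => /andP [q1 q2] Hq.
  by apply/andP; split; apply/existsP; exists q; rewrite ?q1 ?q2.
rewrite eU; move: eI.
have := Hw u.
case: [exists q in T1 :&: T2, anc par u q];
case: [exists q in T1, anc par u q]; case: [exists q in T2, anc par u q] => //= h E; try (by have := E isT); lra.
Qed.

Lemma EWE (pi : V -> R) (S : {set V}) :
  EW r par w pi S = \sum_om prob_set pi om * Dv (S :&: om) + dist r par w a * Pr pi S.
Proof.
rewrite -prob_nonempty mulr_sumr -big_split /=; apply: eq_bigr => om _.
rewrite /Dv mulrBr mulrCA; ring.
Qed.

End Main.

Theorem proposition2 (R : realFieldType) (V : finType) (r : V) (par : V -> V)
  (w pi p : V -> R)
  (Htree : is_rooted_tree r par)
  (Hw : forall v, 0 <= w v)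
  (Hpi : forall v, 0 < pi v <= 1)
  (a : V) (S1 S2 : {set V}) (x : R)
  (HS1 : S1 \subset subtree par a) (HS2 : S2 \subset subtree par a)
  (Hx0 : 0 <= x) (Hx1 : x <= dist r par w a) :
  G r par w pi p S1 x + G r par w pi p S2 x <=
  G r par w pi p (S1 :|: S2) x + G r par w pi p (S1 :&: S2) x.
Proof.
rewrite /G !(EWE r par w a).
have hL : \sum_(s in S1 :|: S2) p s * pi s + \sum_(s in S1 :&: S2) p s * pi s =
          \sum_(s in S1) p s * pi s + \sum_(s in S2) p s * pi s.
  have sE : forall A : {set V}, \sum_(s in A) p s * pi s = \sum_s (if s \in A then p s * pi s else 0).
    by move=> A; rewrite big_mkcond.
  rewrite !sE -!big_split /=; apply: eq_bigr => s _; rewrite !inE.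
  by case: (s \in S1); case: (s \in S2); rewrite /= ?addr0 ?add0r.
have hD : \sum_om prob_set pi om * Dv r par w a ((S1 :|: S2) :&: om)
        + \sum_om prob_set pi om * Dv r par w a ((S1 :&: S2) :&: om) <=
          \sum_om prob_set pi om * Dv r par w a (S1 :&: om)
        + \sum_om prob_set pi om * Dv r par w a (S2 :&: om).
  rewrite -!big_split /=; apply: ler_sum => om _; rewrite -!mulrDr.
  apply: ler_wpM2l; first exact: prob_ge0.
  rewrite setIUl setIIl; apply: D_sub => //.
    by apply: subset_trans HS1; apply: subsetIl.
  by apply: subset_trans HS2; apply: subsetIl.
have hP : Pr pi (S1 :|: S2) + Pr pi (S1 :&: S2) <= Pr pi S1 + Pr pi S2.
  rewrite /Pr.
  rewrite (@big_setID _ _ _ _ (S1 :|: S2) S1) (@big_setID _ _ _ _ S2 S1) /=.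
  have e1 : (S1 :|: S2) :&: S1 = S1.
    by apply/setP => v; rewrite !inE; case: (v \in S1); case: (v \in S2).
  have e2 : (S1 :|: S2) :\: S1 = S2 :\: S1.
    by apply/setP => v; rewrite !inE; case: (v \in S1); case: (v \in S2).
  rewrite e1 e2 (@big_setID _ _ _ _ S1 S2) /= (setIC S2 S1).
  have g01 : forall A : {set V}, 0 <= \prod_(v in A) (1 - pi v) <= 1.
    move=> A; apply/andP; split.
      by apply: prodr_ge0 => v _; have := Hpi v; case/andP => ? ?; lra.
    by apply: prodr_ile1 => v _; have := Hpi v; case/andP => ? ?; apply/andP; split; lra.
  set c := \prod_(v in S1 :&: S2) (1 - pi v).
  set m := \prod_(v in S1 :\: S2) (1 - pi v).
  set b := \prod_(v in S2 :\: S1) (1 - pi v).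
  have := g01 (S1 :&: S2); have := g01 (S1 :\: S2); have := g01 (S2 :\: S1).
  rewrite -/c -/m -/b => /andP [b0 b1] /andP [m0 m1] /andP [c0 c1].
  have h3 : 0 <= c * (1 - m) * (1 - b).
    by apply: mulr_ge0; [apply: mulr_ge0|]; lra.
  nra.
have hd : 0 <= dist r par w a - x by lra.
have hPx := ler_wpM2l hd hP.
nra.
Qed.
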